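(* If $G$ is a graph of order $n$, then $\operatorname{lb}_1(G)\leq\frac{n-1}{2}$, with equality if and only if $G$ is a conference graph.
   Context: All graphs are finite and simple. For a graph $G$ and a partition $\mathcal{P}$ of $V(G)$, the quotient trigraph $G/\mathcal{P}$ has vertex set $\mathcal{P}$; two distinct parts $U,W$ are joined by a black edge if every pair $\{u,w\}$ with $u\in U,w\in W$ is an edge of $G$, are non-adjacent if no such pair is an edge, and are joined by a red edge otherwise; the red degree of a part is the number of red edges incident to it. For $|V(G)|\geq 2$, $\operatorname{lb}_1(G)$ is the minimum, over all 2-element subsets $\{u,v\}\subseteq V(G)$, of the maximum red degree of $G/\mathcal{P}$, where $\mathcal{P}$ is the partition whose only non-singleton part is $\{u,v\}$; for $|V(G)|=1$, $\operatorname{lb}_1(G)\coloneqq 0$. A graph $G$ of order $n$ is strongly regular with parameters $(n,d,\lambda,\mu)$ if it is $d$-regular and any two distinct adjacent vertices have exactly $\lambda$ common neighbors while any two distinct non-adjacent vertices have exactly $\mu$ common neighbors. A conference graph is a strongly regular graph with parameters $(n,\frac{n-1}{2},\frac{n-5}{4},\frac{n-1}{4})$. *)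

(* Defs.v *)
From mathcomp Require Import all_boot all_order all_algebra.
Set Implicit Arguments. Unset Strict Implicit. Unset Printing Implicit Defensive.
Import Order.TTheory GRing.Theory Num.Theory.

(* A finite simple graph: vertex type T : finType, adjacency e : rel T,
   assumed symmetric and irreflexive (hypotheses of the theorem). *)

Section Defs.
Variables (T : finType) (e : rel T).

Definition red_edge (U W : {set T}) : bool :=
  [exists u in U, exists w in W, e u w] &&
  [exists u in U, exists w in W, ~~ e u w].

Definition red_degree (P : {set {set T}}) (U : {set T}) : nat :=
  #|[set W in P | (W != U) && red_edge U W]|.

Definition max_red_degree (P : {set {set T}}) : nat :=
  \max_(U in P) red_degree P U.

Definition pair_partition (u v : T) : {set {set T}} :=
  [set [set u; v]] :|: [set [set w] | w in [set w | (w != u) && (w != v)]].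

(* lb_1(G): minimum over 2-subsets {u,v} (enumerated as ordered pairs with
   u != v) of the max red degree of G/P_{uv}; 0 if |V(G)| = 1.
   The neutral element #|T| of the minimum is irrelevant when |V(G)| >= 2,
   since the index range is then nonempty. *)
Definition lb1 : nat :=
  if #|T| <= 1 then 0
  else \big[minn/#|T|]_(p : T * T | p.1 != p.2) max_red_degree (pair_partition p.1 p.2).

Local Open Scope ring_scope.
(* strongly regular with parameters (n,d,lambda,mu), taken in rat so that
   parameters such as (n-5)/4 make sense literally *)
Definition strongly_regular (n d lam mu : rat) : Prop :=
  [/\ (#|T|%:R = n),
      (forall x : T, (#|[set y | e x y]|%:R = d)),
      (forall x y : T, x != y -> e x y ->
         #|[set z | e x z && e y z]|%:R = lam) &
      (forall x y : T, x != y -> ~~ e x y ->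
         #|[set z | e x z && e y z]|%:R = mu)].

Definition conference_graph : Prop :=
  let n : rat := #|T|%:R in
  strongly_regular n ((n - 1) / 2) ((n - 5) / 4) ((n - 1) / 4).

End Defs.

(* Main.v *)
Require Import Defs.
From mathcomp Require Import all_boot all_order all_algebra zify.
Import Order.TTheory GRing.Theory Num.Theory.

Section Aux.
Variables (T : finType) (e : rel T).
Hypotheses (e_sym : symmetric e) (e_irr : irreflexive e).

Lemma ex_set1 (p : T -> bool) w : [exists a in [set w], p a] = p w.
Proof.
apply/existsP/idP => [[a /andP[/set1P -> //]]|H]; by exists w; rewrite set11.
Qed.

Lemma ex_set2 (p : T -> bool) u v : [exists a in [set u; v], p a] = p u || p v.
Proof.
apply/existsP/orP => [[a /andP[/set2P [->|->] H]]|[H|H]]; [by left|by right| |];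
  [exists u | exists v]; by rewrite !inE eqxx ?orbT.
Qed.

Lemma red21 u v w : red_edge e [set u; v] [set w] = (e u w != e v w).
Proof.
rewrite /red_edge !ex_set2 !ex_set1.
by case: (e u w); case: (e v w).
Qed.

Lemma red12 u v w : red_edge e [set w] [set u; v] = (e u w != e v w).
Proof.
rewrite /red_edge !ex_set1 !ex_set2 (e_sym w u) (e_sym w v).
by case: (e u w); case: (e v w).
Qed.

Lemma red11 x w : red_edge e [set w] [set x] = false.
Proof. by rewrite /red_edge !ex_set1; case: (e w x). Qed.

Definition Dset u v := [set w | (w != u) && (w != v) && (e u w != e v w)].
Definition Dn u v := \sum_w ((w != u) && (w != v) && (e u w != e v w) : nat).

Lemma card_sum (P : pred T) : #|[set w | P w]| = \sum_w (P w : nat).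
Proof.
rewrite -sum1_card big_mkcond /=; apply: eq_bigr => w _; rewrite inE.
by case: (P w).
Qed.

Lemma red_deg_pair u v : u != v ->
  red_degree e (pair_partition u v) [set u; v] = Dn u v.
Proof.
move=> uv; rewrite /red_degree.
have -> : [set W in pair_partition u v | (W != [set u; v]) && red_edge e [set u; v] W]
   = [set [set w] | w in Dset u v].
  apply/eqP; rewrite eqEsubset; apply/andP; split; apply/subsetP => W.
  - rewrite !inE => /andP[/orP[/eqP ->|]]; first by rewrite eqxx.
    case/imsetP => w; rewrite inE => /andP[wu wv] -> /andP[_].
    rewrite red21 => H; apply/imsetP; exists w => //; by rewrite /Dset inE wu wv H.
  - case/imsetP => w; rewrite /Dset inE => /andP[/andP[wu wv] H] ->.
    rewrite !inE red21 H andbT; apply/andP; split.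
      apply/orP; right; apply/imsetP; exists w => //; by rewrite inE wu wv.
    apply/negP => /eqP E.
    have : u \in [set w] by rewrite E !inE eqxx.
    by rewrite inE eq_sym (negbTE wu).
rewrite card_imset; last exact: set1_inj.
by rewrite /Dset card_sum.
Qed.

Lemma red_deg_single u v w : w != u -> w != v ->
  red_degree e (pair_partition u v) [set w] <= Dn u v.
Proof.
move=> wu wv.
apply: (@leq_trans (e u w != e v w)).
  rewrite /red_degree.
  apply: (@leq_trans #|[set [set u; v]] :&: [set W | e u w != e v w]|).
    apply: subset_leq_card; apply/subsetP => W.
    rewrite !inE => /andP[/orP[/eqP ->|]].
      by rewrite red12 => /andP[_ ->]; rewrite eqxx.
    case/imsetP => x _ -> /andP[_]; by rewrite red11.
  case: (e u w != e v w).
    by rewrite setIT cards1.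
  by rewrite setI0 cards0.
rewrite /Dn (bigD1 w) //= wu wv /=; exact: leq_addr.
Qed.

Lemma max_red u v : u != v -> max_red_degree e (pair_partition u v) = Dn u v.
Proof.
move=> uv; apply/eqP; rewrite eqn_leq; apply/andP; split.
  apply/bigmax_leqP => U; rewrite !inE => /orP[/eqP ->|].
    by rewrite red_deg_pair.
  case/imsetP => w; rewrite inE => /andP[wu wv] ->; exact: red_deg_single.
rewrite -red_deg_pair //; apply: (@leq_bigmax_cond _ _ _ [set u; v]).
by rewrite !inE eqxx.
Qed.

Definition dg w := \sum_b (e b w : nat).
Definition cg w := \sum_b ((b != w) && ~~ e b w : nat).

Lemma sum_eq1 (a : T) : \sum_b ((b == a) : nat) = 1.
Proof. by rewrite (bigD1 a) //= eqxx big1 ?addn0 // => b /negbTE ->. Qed.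

Lemma sum_neq (a : T) : \sum_b ((a != b) : nat) = #|T|.-1.
Proof.
have H : \sum_b ((a != b) : nat) + \sum_b ((b == a) : nat) = #|T|.
  rewrite -big_split -sum1_card /=; apply: eq_bigr => b _.
  by rewrite eq_sym; case: (b == a).
by rewrite sum_eq1 in H; rewrite -H addn1.
Qed.

Lemma dc w : dg w + cg w + 1 = #|T|.
Proof.
rewrite -(sum_eq1 w) /dg /cg -!big_split -sum1_card /=; apply: eq_bigr => b _.
case: eqP => [->|_]; first by rewrite e_irr.
by case: (e b w).
Qed.

Lemma row_sum w a : \sum_b ((a != w) && (b != w) && (e a w != e b w) : nat)
   = (e a w) * cg w + ((a != w) && ~~ e a w) * dg w.
Proof.
case Ea: (e a w).
  have aw : a != w by apply/eqP => E; rewrite E e_irr in Ea.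
  rewrite aw mul1n mul0n addn0 /cg; apply: eq_bigr => b _.
  by case: (e b w); rewrite ?andbF ?andbT.
case aw: (a != w); rewrite ?mul0n ?mul1n /=.
  rewrite /dg; apply: eq_bigr => b _.
  case: eqP => [->|_]; first by rewrite e_irr.
  by case: (e b w).
by rewrite big1.
Qed.

Lemma col_sum w :
  \sum_(p : T * T) ((p.1 != w) && (p.2 != w) && (e p.1 w != e p.2 w) : nat)
   = 2 * (dg w * cg w).
Proof.
rewrite -(pair_bigA _ (fun a b => ((a != w) && (b != w) && (e a w != e b w) : nat))) /=.
rewrite (eq_bigr _ (fun a _ => row_sum w a)) big_split /= -!big_distrl /=.
by rewrite -/(dg w) -/(cg w) mulnC; lia.
Qed.

Lemma sumD : \sum_(p : T * T) Dn p.1 p.2 = \sum_w 2 * (dg w * cg w).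
Proof.
rewrite /Dn exchange_big /=; apply: eq_bigr => w _; rewrite -col_sum.
by apply: eq_bigr => p _; rewrite !(eq_sym w).
Qed.

Lemma Dn_diag u : Dn u u = 0.
Proof. by rewrite /Dn big1 // => w _; rewrite eqxx andbF. Qed.

Lemma sumD_cond : \sum_(p : T * T | p.1 != p.2) Dn p.1 p.2 = \sum_(p : T * T) Dn p.1 p.2.
Proof.
rewrite big_mkcond /=; apply: eq_bigr => [[a b]] _ /=.
by case: eqP => // ->; rewrite Dn_diag.
Qed.

Lemma sum_pairs k : \sum_(p : T * T | p.1 != p.2) k = #|T| * #|T|.-1 * k.
Proof.
rewrite big_mkcond /= -(pair_bigA _ (fun a b => if a != b then k else 0)) /=.
rewrite (eq_bigr (fun _ => #|T|.-1 * k)); first by rewrite sum_nat_const mulnA.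
move=> a _; rewrite -(sum_neq a) big_distrl /=; apply: eq_bigr => b _.
by case: (a != b); rewrite ?mul1n ?mul0n.
Qed.

Lemma sum_eq_pt (I : finType) (P : pred I) (F G : I -> nat) :
  (forall i, P i -> F i <= G i) ->
  \sum_(i | P i) G i <= \sum_(i | P i) F i -> forall i, P i -> G i = F i.
Proof.
move=> le H.
have E : \sum_(i | P i) G i = \sum_(i | P i) F i + \sum_(i | P i) (G i - F i).
  by rewrite -big_split /=; apply: eq_bigr => j Pj; rewrite subnKC // le.
have : \sum_(i | P i) (G i - F i) == 0 by rewrite -leqn0; lia.
rewrite sum_nat_eq0 => /forall_inP Z i Pi.
have := Z i Pi; have := le i Pi; lia.
Qed.

Lemma bigmin_le (I : finType) (P : pred I) (F : I -> nat) x j :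
  P j -> \big[minn/x]_(i | P i) F i <= F j.
Proof.
move=> Pj; have : j \in index_enum I by rewrite mem_index_enum.
elim: (index_enum I) => [//|a r IH]; rewrite inE big_cons => /orP[/eqP<-|/IH H].
  by rewrite Pj geq_minl.
case: (P a) => //; exact: leq_trans (geq_minr _ _) H.
Qed.

Lemma lb1_le u v : u != v -> lb1 e <= Dn u v.
Proof.
move=> uv; rewrite /lb1; case: ifP => // _.
rewrite -max_red //; exact: (@bigmin_le _ _ _ _ (u, v)).
Qed.

Lemma lb1_ge k : 1 < #|T| -> k <= #|T| ->
  (forall u v, u != v -> k <= Dn u v) -> k <= lb1 e.
Proof.
move=> n1 kn H; rewrite /lb1 ifN; last by rewrite -ltnNge.
apply: (big_ind (fun x => k <= x)) => //.
  by move=> x y; rewrite leq_min => -> ->.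
by move=> [a b] /= ab; rewrite max_red // H.
Qed.

Lemma key : 0 < #|T| -> 2 * lb1 e <= #|T|.-1 /\
  (2 * lb1 e = #|T|.-1 ->
     (forall w, 2 * dg w = #|T|.-1) /\ (forall u v, u != v -> Dn u v = lb1 e)).
Proof.
move=> n0.
have nm : #|T| = #|T|.-1.+1 by rewrite prednK.
set n := #|T| in n0 nm *. set m := n.-1 in nm *.
set S := \sum_(p : T*T) Dn p.1 p.2.
have H1 : n * m * lb1 e <= S.
  rewrite -sum_pairs /S -sumD_cond; apply: leq_sum => p; exact: lb1_le.
have Hdc w : dg w + cg w = m by have := dc w; rewrite -/n; lia.
have H2 : 2 * S = \sum_w 4 * (dg w * cg w).
  rewrite /S sumD big_distrr /=; apply: eq_bigr => w _; lia.
have H3 : \sum_w 4 * (dg w * cg w) <= \sum_(w : T) m * m.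
  apply: leq_sum => w _; rewrite -(Hdc w).
  exact: (nat_AGM2 (dg w) (cg w)).1.
have H4 : \sum_(w : T) m * m = n * m * m by rewrite sum_nat_const mulnA.
split.
  case m0: (m == 0).
    have -> : lb1 e = 0 by rewrite /lb1 ifT // -/n nm (eqP m0).
    by [].
  have pos : 0 < n * m by rewrite nm muln_gt0 /= lt0n m0.
  rewrite -(leq_pmul2l pos); nia.
move=> Hl; split.
  move=> w.
  have E := @sum_eq_pt T xpredT (fun w => 4 * (dg w * cg w)) (fun _ => m * m).
  have := E _ _ w isT.
  have := Hdc w.
  move=> Hw E'.
  have E2 : m * m = 4 * (dg w * cg w).
    apply: E' => [i _|]; first by rewrite -(Hdc i); exact: (nat_AGM2 _ _).1.
    rewrite H4 -H2; nia.
  have A := (nat_AGM2 (dg w) (cg w)).2.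
  change ((4 * (dg w * cg w) == (dg w + cg w) * (dg w + cg w)) = (dg w == cg w)) in A.
  move: A; rewrite (Hdc w) E2 eqxx => /esym/eqP.
  lia.
move=> u v uv.
have E := @sum_eq_pt (T * T)%type (fun p => p.1 != p.2) (fun _ => lb1 e)
   (fun p => Dn p.1 p.2).
apply: (E _ _ (u, v) uv) => [[a b] /= ab|]; first exact: lb1_le.
rewrite sumD_cond sum_pairs -/S; nia.
Qed.

Lemma sum_eqb (a : T) (b : bool) : \sum_w ((w == a) && b : nat) = b.
Proof. by rewrite (bigD1 a) //= eqxx big1 ?addn0 // => w /negbTE ->. Qed.

Lemma ident x y : x != y ->
  Dn x y + 2 * #|[set z | e x z && e y z]| + 2 * (e x y) = dg x + dg y.
Proof.
move=> xy.
have E : \sum_w (((w != x) && (w != y) && (e x w != e y w) : nat)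
            + 2 * (e x w && e y w) + ((w == y) && e x y) + ((w == x) && e y x))
         = \sum_w ((e w x : nat) + e w y).
  apply: eq_bigr => w _.
  case: (eqVneq w x) => [->|wx].
    by rewrite ?e_irr ?(e_sym y x) ?andbF ?(negbTE xy) /=; case: (e x y).
  case: (eqVneq w y) => [->|wy].
    by rewrite ?e_irr ?andbF (e_sym y x) /=; case: (e x y).
  rewrite ?(e_sym w x) ?(e_sym w y) /=.
  by case: (e x w); case: (e y w).
rewrite !big_split /= big1_eq !sum_eqb (e_sym y x) in E.
rewrite card_sum /Dn /dg; lia.
Qed.
End Aux.

From mathcomp Require Import lra.
Local Open Scope ring_scope.

Theorem mainTheorem5 (T : finType) (e : rel T)
  (e_sym : symmetric e) (e_irr : irreflexive e) (T_nonempty : (0 < #|T|)%N) :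
  let n : rat := #|T|%:R in
  ((lb1 e)%:R <= (n - 1) / 2) /\
  ((lb1 e)%:R = (n - 1) / 2 <-> conference_graph e).
Proof.
move=> n; rewrite {}/n.
have nm : #|T| = (#|T|.-1).+1 by rewrite prednK.
set m := #|T|.-1 in nm.
have Hn : (#|T|%:R : rat) = m%:R + 1 by rewrite nm -natr1.
have [K1 K2] := @key T e e_sym e_irr T_nonempty.
have natR : forall a b : nat, (a%:R : rat) = b%:R -> a = b
  by move=> a b /eqP; rewrite eqr_nat => /eqP.
have toR : forall a b : nat, a = b -> (a%:R : rat) = b%:R by move=> a b ->.
have cardd x : #|[set y | e x y]| = dg T e x.
  by rewrite card_sum /dg; apply: eq_bigr => b _; rewrite e_sym.
split.
  have : ((2 * lb1 e)%:R : rat) <= m%:R by rewrite ler_nat.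
  rewrite natrM Hn; lra.
split.
  move=> H.
  have E : (2 * lb1 e)%N = m.
    apply: natR; rewrite natrM H Hn; lra.
  have [Kd KD] := K2 E.
  split.
  - by [].
  - move=> x; rewrite cardd; have := toR _ _ (Kd x); rewrite natrM Hn; lra.
  - move=> x y xy exy.
    have I := @ident T e e_sym e_irr x y xy; rewrite KD // exy in I.
    have : (4 * #|[set z | e x z && e y z]| + 4)%N = m.
      by have := Kd x; have := Kd y; lia.
    move/toR; rewrite natrD natrM Hn; lra.
  - move=> x y xy exy.
    have I := @ident T e e_sym e_irr x y xy; rewrite KD // (negbTE exy) in I.
    have : (4 * #|[set z | e x z && e y z]|)%N = m.
      by have := Kd x; have := Kd y; lia.
    move/toR; rewrite natrM Hn; lra.
move=> [_ Hd Hl Hm].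
case: (leqP #|T| 1) => N1.
  have m0 : m = 0%N by lia.
  rewrite /lb1 N1 Hn m0; lra.
have hd x : (2 * dg T e x)%N = m.
  apply: natR; have := Hd x; rewrite cardd natrM Hn; lra.
have hD u v : u != v -> (2 * Dn T e u v)%N = m.
  move=> uv; have I := @ident T e e_sym e_irr u v uv.
  case exy: (e u v) in I.
    have : (4 * #|[set z | e u z && e v z]| + 4)%N = m.
      apply: natR; have := Hl u v uv exy; rewrite natrD natrM Hn; lra.
    have := hd u; have := hd v; lia.
  have : (4 * #|[set z | e u z && e v z]|)%N = m.
    apply: natR; have := Hm u v uv (negbT exy); rewrite natrM Hn; lra.
  have := hd u; have := hd v; lia.
have [u0 [v0 [_ _ uv0]]] := card_gt1P N1.
have L1 : (Dn T e u0 v0 <= lb1 e)%N.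
  apply: (@lb1_ge T e e_sym) => //.
    have := hD u0 v0 uv0; lia.
  move=> u v uv; have := hD u v uv; have := hD u0 v0 uv0; lia.
have : (2 * lb1 e)%N = m by have := hD u0 v0 uv0; lia.
move/toR; rewrite natrM Hn; lra.
Qed.
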